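(* Let $\mathcal{X}=\{x_k\}_{k=1}^\infty$ be a frame for the complex Hilbert space $\ell_2$. The following are equivalent: (1) $\mathcal{X}$ is injective; (2) $\overline{\mathrm{span}}\{\tilde{x}_k\}_{k=1}^\infty=\tilde{\mathbb{H}}$.
   Context: A family $\{x_k\}$ is called injective if whenever a Hilbert–Schmidt self-adjoint operator $T$ on $\ell_2$ satisfies $\langle Tx_k,x_k\rangle=0$ for all $k$, then $T=0$. Let $\tilde{\mathbb{H}}=\left(\sum_{i=1}^\infty\oplus\ell_2\right)_{\ell_2}$ be the $\ell_2$-direct sum of countably many copies of real $\ell_2$, with elements $(\vec{x}_1,\vec{x}_2,\dots)$ and inner product $\sum_i\langle\vec{x}_i,\vec{y}_i\rangle$. For $x=(x_i)_{i=1}^\infty\in\ell_2$ (complex), define $\tilde{x}=(\vec{x}_1,\vec{x}_2,\dots)\in\tilde{\mathbb{H}}$ with $\vec{x}_n=(|x_n|^2,\mathrm{Re}(\bar{x}_nx_{n+1}),\mathrm{Im}(\bar{x}_nx_{n+1}),\mathrm{Re}(\bar{x}_nx_{n+2}),\mathrm{Im}(\bar{x}_nx_{n+2}),\dots)$. *)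

(* Defs.v *)
From Stdlib Require Import Reals.
From Coquelicot Require Import Coquelicot.
Open Scope R_scope.

Definition Cseries (a : nat -> C) : C :=
  (Series (fun n => Re (a n)), Series (fun n => Im (a n))).

Definition is_l2 (x : nat -> C) : Prop :=
  ex_series (fun i => (Cmod (x i)) ^ 2).

Definition l2norm2 (x : nat -> C) : R := Series (fun i => (Cmod (x i)) ^ 2).

Definition l2inner (x y : nat -> C) : C :=
  Cseries (fun i => Cmult (x i) (Cconj (y i))).

Definition is_frame (X : nat -> (nat -> C)) : Prop :=
  (forall k, is_l2 (X k)) /\
  exists A B : R, 0 < A /\ 0 < B /\
    forall x, is_l2 x ->
      ex_series (fun k => (Cmod (l2inner x (X k))) ^ 2) /\
      A * l2norm2 x <= Series (fun k => (Cmod (l2inner x (X k))) ^ 2) /\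
      Series (fun k => (Cmod (l2inner x (X k))) ^ 2) <= B * l2norm2 x.

(** Hilbert–Schmidt operators on l2, given by their matrix
    T i j = <T e_j, e_i> in the standard basis: square-summable matrices. *)
Definition is_HS (T : nat -> nat -> C) : Prop :=
  (forall i, ex_series (fun j => (Cmod (T i j)) ^ 2)) /\
  ex_series (fun i => Series (fun j => (Cmod (T i j)) ^ 2)).

Definition is_selfadjoint (T : nat -> nat -> C) : Prop :=
  forall i j, T i j = Cconj (T j i).

Definition op_apply (T : nat -> nat -> C) (x : nat -> C) : nat -> C :=
  fun i => Cseries (fun j => Cmult (T i j) (x j)).

Definition injective_family (X : nat -> (nat -> C)) : Prop :=
  forall T : nat -> nat -> C, is_HS T -> is_selfadjoint T ->
    (forall k, l2inner (op_apply T (X k)) (X k) = 0%C) ->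
    forall i j, T i j = 0%C.

(** The real Hilbert space Htilde = (sum_i (+) l2)_{l2}: elements are
    double sequences v n m (n-th block, m-th coordinate). *)
Definition in_Htilde (v : nat -> nat -> R) : Prop :=
  (forall n, ex_series (fun m => (v n m) ^ 2)) /\
  ex_series (fun n => Series (fun m => (v n m) ^ 2)).

Definition Htilde_norm (v : nat -> nat -> R) : R :=
  sqrt (Series (fun n => Series (fun m => (v n m) ^ 2))).

(** x~ : block n (0-indexed) is
    (|x_n|^2, Re(conj x_n x_{n+1}), Im(conj x_n x_{n+1}),
              Re(conj x_n x_{n+2}), Im(conj x_n x_{n+2}), ...). *)
Definition tilde (x : nat -> C) (n m : nat) : R :=
  match m with
  | O => (Cmod (x n)) ^ 2
  | S _ =>
      let p := Nat.div (m + 1) 2 in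
      if Nat.odd m then Re (Cmult (Cconj (x n)) (x (n + p)%nat))
      else Im (Cmult (Cconj (x n)) (x (n + p)%nat))
  end.

(** closed (real) linear span of a family in Htilde is all of Htilde:
    every element is a norm-limit of finite real linear combinations. *)
Definition dense_span_Htilde (Y : nat -> (nat -> nat -> R)) : Prop :=
  forall v, in_Htilde v -> forall eps : R, 0 < eps ->
    exists (N : nat) (c : nat -> R),
      Htilde_norm (fun n m => v n m - sum_n (fun k => c k * Y k n m) N) < eps.

(* Main.v *)
Require Import Defs.
From Stdlib Require Import Reals Lra Lia Psatz FunctionalExtensionality ClassicalEpsilon Classical.
From Coquelicot Require Import Coquelicot.
Open Scope R_scope.


Fixpoint fsum (f : nat -> R) (n : nat) : R :=
  match n with O => 0 | S n => fsum f n + f n end.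

Lemma fsum_ext f g n : (forall i, (i < n)%nat -> f i = g i) -> fsum f n = fsum g n.
Proof. induction n; simpl; intros H; auto. rewrite IHn by (intros; apply H; lia). rewrite H by lia; auto. Qed.

Lemma fsum_plus f g n : fsum (fun i => f i + g i) n = fsum f n + fsum g n.
Proof. induction n; simpl; [lra|rewrite IHn; lra]. Qed.

Lemma fsum_scal c f n : fsum (fun i => c * f i) n = c * fsum f n.
Proof. induction n; simpl; [lra|rewrite IHn; lra]. Qed.

Lemma fsum_opp f n : fsum (fun i => - f i) n = - fsum f n.
Proof. induction n; simpl; [lra|rewrite IHn; lra]. Qed.

Lemma fsum_le f g n : (forall i, (i < n)%nat -> f i <= g i) -> fsum f n <= fsum g n.
Proof. induction n; simpl; intros H; [lra|]. assert (fsum f n <= fsum g n) by (apply IHn; intros; apply H; lia).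
  assert (f n <= g n) by (apply H; lia). lra. Qed.

Lemma fsum_nonneg f n : (forall i, (i < n)%nat -> 0 <= f i) -> 0 <= fsum f n.
Proof. intros H. replace 0 with (fsum (fun _ => 0) n). apply fsum_le; auto.
  induction n; simpl; auto. rewrite IHn; [lra|intros; apply H; lia]. Qed.

Lemma fsum_zero n : fsum (fun _ => 0) n = 0.
Proof. induction n; simpl; auto. rewrite IHn; lra. Qed.

Lemma fsum_abs f n : Rabs (fsum f n) <= fsum (fun i => Rabs (f i)) n.
Proof. induction n; simpl. rewrite Rabs_R0; lra.
  eapply Rle_trans. apply Rabs_triang. lra. Qed.

Lemma fsum_split f n d : fsum f (n + d) = fsum f n + fsum (fun i => f (n + i)%nat) d.
Proof. induction d; simpl. rewrite Nat.add_0_r; lra. rewrite Nat.add_succ_r. simpl. rewrite IHd; lra. Qed.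

Lemma fsum_mono f n m : (forall i, 0 <= f i) -> (n <= m)%nat -> fsum f n <= fsum f m.
Proof. intros H Hnm. replace m with (n + (m - n))%nat by lia. rewrite fsum_split.
  assert (0 <= fsum (fun i => f (n + i)%nat) (m - n)) by (apply fsum_nonneg; auto). lra. Qed.

Lemma fsum_sum_n f N : sum_n f N = fsum f (S N).
Proof. rewrite sum_n_Reals. induction N; simpl; auto. lra. rewrite IHN. simpl. lra. Qed.

Lemma fsum_lim (u : nat -> nat -> R) (l : nat -> R) n :
  (forall i, (i < n)%nat -> is_lim_seq (u i) (l i)) ->
  is_lim_seq (fun M => fsum (fun i => u i M) n) (fsum l n).
Proof. induction n; simpl; intros H. apply is_lim_seq_const.
  apply is_lim_seq_plus'. apply IHn; intros; apply H; lia. apply H; lia. Qed.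

Lemma fsum_pairs h L : fsum h (2 * L + 1) = h 0%nat + fsum (fun p => h (2 * p + 1)%nat + h (2 * p + 2)%nat) L.
Proof. induction L. simpl. lra.
  replace (2 * S L + 1)%nat with (S (S (2 * L + 1))) by lia.
  change (fsum h (S (S (2*L+1)))) with (fsum h (2*L+1) + h (2*L+1)%nat + h (S (2*L+1))).
  rewrite IHL. change (fsum (fun p => h (2 * p + 1)%nat + h (2 * p + 2)%nat) (S L)) with
   (fsum (fun p => h (2 * p + 1)%nat + h (2 * p + 2)%nat) L + (h (2 * L + 1)%nat + h (2 * L + 2)%nat)).
  replace (S (2 * L + 1)) with (2 * L + 2)%nat by lia. lra. Qed.

Lemma fsum_tri (g : nat -> nat -> R) N :
  fsum (fun i => fsum (fun j => g i j) N) N =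
  fsum (fun n => g n n + fsum (fun p => g n (n + 1 + p)%nat + g (n + 1 + p)%nat n) (N - 1 - n)) N.
Proof. induction N. simpl. auto.
  assert (E1: fsum (fun i => fsum (fun j => g i j) (S N)) (S N) = fsum (fun i => fsum (fun j => g i j) N) N + fsum (fun i => g i N) N + (fsum (fun j => g N j) N + g N N)).
  { simpl. rewrite fsum_plus. lra. }
  rewrite E1, IHN. clear E1.
  change (fsum (fun n => g n n + fsum (fun p => g n (n + 1 + p)%nat + g (n + 1 + p)%nat n) (S N - 1 - n)) (S N))
   with (fsum (fun n => g n n + fsum (fun p => g n (n + 1 + p)%nat + g (n + 1 + p)%nat n) (S N - 1 - n)) N +
    (g N N + fsum (fun p => g N (N + 1 + p)%nat + g (N + 1 + p)%nat N) (S N - 1 - N))).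
  rewrite (fsum_ext (fun n => g n n + fsum (fun p => g n (n + 1 + p)%nat + g (n + 1 + p)%nat n) (S N - 1 - n))
     (fun n => (g n n + fsum (fun p => g n (n + 1 + p)%nat + g (n + 1 + p)%nat n) (N - 1 - n)) + (g n N + g N n))).
  2:{ intros i Hi. replace (S N - 1 - i)%nat with (S (N - 1 - i)) by lia. simpl. replace (i + 1 + (N - 1 - i))%nat with N by lia. lra. }
  rewrite (fsum_plus (fun n => g n n + fsum (fun p => g n (n + 1 + p)%nat + g (n + 1 + p)%nat n) (N - 1 - n)) (fun n => g n N + g N n)).
  rewrite (fsum_plus (fun n => g n N) (fun n => g N n)). replace (S N - 1 - N)%nat with 0%nat by lia. simpl. lra. Qed.

Lemma fsum_prod f n : fsum (fun i => fsum (fun j => f i * f j) n) n = fsum f n * fsum f n.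
Proof. rewrite (fsum_ext _ (fun i => f i * fsum f n)) by (intros; apply fsum_scal).
  rewrite (fsum_ext _ (fun i => fsum f n * f i)) by (intros; lra). apply fsum_scal. Qed.


Lemma ser_lim a : ex_series a -> is_lim_seq (fsum a) (Series a).
Proof. intros H. apply Series_correct in H. unfold is_series in H.
  apply is_lim_seq_incr_1. eapply is_lim_seq_ext. intros n. apply fsum_sum_n. exact H. Qed.

Lemma lim_ser a (l : R) : is_lim_seq (fsum a) l -> is_series a l.
Proof. intros H. apply is_lim_seq_incr_1 in H. unfold is_series.
  eapply is_lim_seq_ext in H. exact H. intros n; simpl. rewrite fsum_sum_n. reflexivity. Qed.

Lemma lim_ex_ser a (l : R) : is_lim_seq (fsum a) l -> ex_series a /\ Series a = l.
Proof. intros H. apply lim_ser in H. split. exists l; auto. apply is_series_unique; auto. Qed.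

Lemma lim_le_R (u : nat -> R) (l C : R) : is_lim_seq u l -> (forall n, u n <= C) -> l <= C.
Proof. intros H1 H2. assert (Rbar_le l C). eapply is_lim_seq_le; [exact H2|exact H1|apply is_lim_seq_const]. simpl in H; auto. Qed.

Lemma lim_ge_R (u : nat -> R) (l C : R) : is_lim_seq u l -> (forall n, C <= u n) -> C <= l.
Proof. intros H1 H2. assert (Rbar_le C l). eapply is_lim_seq_le; [exact H2|apply is_lim_seq_const|exact H1]. simpl in H; auto. Qed.

Lemma lim_le_lim (u v : nat -> R) (l1 l2 : R) : is_lim_seq u l1 -> is_lim_seq v l2 -> (forall n, u n <= v n) -> l1 <= l2.
Proof. intros H1 H2 H3. assert (Rbar_le l1 l2). eapply is_lim_seq_le; eauto. simpl in H; auto. Qed.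

Lemma fsum_le_Series a n : ex_series a -> (forall i, 0 <= a i) -> fsum a n <= Series a.
Proof. intros H Hp. apply (lim_ge_R (fun m => fsum a (m + n))).
  apply (is_lim_seq_incr_n (fsum a)). apply ser_lim; auto.
  intros m. apply fsum_mono; auto; lia. Qed.

Lemma Series_nonneg' a : ex_series a -> (forall i, 0 <= a i) -> 0 <= Series a.
Proof. intros. apply (fsum_le_Series a 0); auto. Qed.

Lemma bounded_ex_series a C : (forall i, 0 <= a i) -> (forall n, fsum a n <= C) -> ex_series a /\ Series a <= C.
Proof. intros Hp Hb.
  assert (Hg : Un_growing (fsum a)). { intros n; simpl. specialize (Hp n). lra. }
  assert (Hu : has_ub (fsum a)). { exists C. intros x [n ->]. auto. }
  destruct (growing_cv _ Hg Hu) as [l Hl]. apply is_lim_seq_Reals in Hl.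
  destruct (lim_ex_ser _ _ Hl) as [He Hs]. split; auto. rewrite Hs. eapply lim_le_R; eauto. Qed.

Lemma ex_series_le_R (a b : nat -> R) : (forall n, Rabs (a n) <= b n) -> ex_series b -> ex_series a.
Proof. intros H Hb. apply (@ex_series_le R_AbsRing R_CompleteNormedModule a b); auto. Qed.

Lemma ex_series_plus_R (a b : nat -> R) : ex_series a -> ex_series b -> ex_series (fun n => a n + b n).
Proof. intros. apply (ex_series_plus a b); auto. Qed.

Lemma ex_series_scal_R (c : R) (a : nat -> R) : ex_series a -> ex_series (fun n => c * a n).
Proof. intros. apply (ex_series_scal_l c a); auto. Qed.

Lemma ex_series_abs_le (a b : nat -> R) : (forall n, Rabs (a n) <= b n) -> ex_series b -> ex_series (fun n => Rabs (a n)).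
Proof. intros H Hb. eapply ex_series_le_R; [|exact Hb]. intros n. rewrite Rabs_Rabsolu; auto. Qed.

Lemma tail_bound a n : ex_series (fun i => Rabs (a i)) ->
  Rabs (Series a - fsum a n) <= Series (fun i => Rabs (a i)) - fsum (fun i => Rabs (a i)) n.
Proof. intros Ha. assert (Ha' : ex_series a) by (apply ex_series_Rabs; auto).
  apply (lim_le_lim (fun m => Rabs (fsum a (n + m) - fsum a n)) (fun m => fsum (fun i => Rabs (a i)) (n + m) - fsum (fun i => Rabs (a i)) n)).
  - apply (is_lim_seq_abs _ (Series a - fsum a n)). apply is_lim_seq_minus'. 2: apply is_lim_seq_const.
    eapply is_lim_seq_ext. intros m. rewrite Nat.add_comm. reflexivity. apply (is_lim_seq_incr_n (fsum a)). apply ser_lim; auto.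
  - apply is_lim_seq_minus'. 2: apply is_lim_seq_const.
    eapply is_lim_seq_ext. intros m. rewrite Nat.add_comm. reflexivity. apply (is_lim_seq_incr_n (fsum _)). apply ser_lim; auto.
  - intros m. rewrite !fsum_split. replace (fsum a n + fsum (fun i => a (n + i)%nat) m - fsum a n) with (fsum (fun i => a (n + i)%nat) m) by ring.
    replace (fsum (fun i => Rabs (a i)) n + fsum (fun i => Rabs (a (n + i)%nat)) m - fsum (fun i => Rabs (a i)) n) with (fsum (fun i => Rabs (a (n + i)%nat)) m) by ring.
    apply fsum_abs. Qed.

Lemma Series_abs_le a : ex_series (fun i => Rabs (a i)) -> Rabs (Series a) <= Series (fun i => Rabs (a i)).
Proof. apply Series_Rabs. Qed.

Lemma ex_series_ext_R (a b : nat -> R) : (forall n, a n = b n) -> ex_series a -> ex_series b.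
Proof. intros H. apply (ex_series_ext a b H). Qed.


Lemma zero_ser : ex_series (fun _ : nat => 0) /\ Series (fun _ : nat => 0) = 0.
Proof. apply lim_ex_ser. eapply is_lim_seq_ext; [|apply is_lim_seq_const]. intros n; simpl. rewrite fsum_zero; auto. Qed.


Definition AS (a : nat -> nat -> R) :=
  (forall i, ex_series (fun j => Rabs (a i j))) /\ ex_series (fun i => Series (fun j => Rabs (a i j))).

Lemma AS_rows a : AS a -> forall i, ex_series (a i).
Proof. intros [H _] i. apply ex_series_Rabs. apply H. Qed.

Lemma AS_outer a : AS a -> ex_series (fun i => Series (a i)).
Proof. intros [H1 H2]. eapply ex_series_le_R; [|exact H2]. intros i. apply Series_Rabs. apply H1. Qed.

Lemma AS_le a b : (forall i j, Rabs (a i j) <= b i j) -> (forall i, ex_series (b i)) ->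
  ex_series (fun i => Series (b i)) -> AS a.
Proof. intros H Hb Hb2. split. intros i. eapply ex_series_abs_le; [|apply Hb]. intros; apply H.
  eapply ex_series_le_R; [|exact Hb2]. intros i. rewrite Rabs_pos_eq.
  apply Series_le; [|apply Hb]. intros j; split; [apply Rabs_pos|apply H].
  apply Series_nonneg'. eapply ex_series_abs_le; [|apply Hb]. intros; apply H. intros; apply Rabs_pos. Qed.

Lemma DF1 (g : nat -> nat -> R) N M : (forall i j, 0 <= g i j) -> (forall i, ex_series (g i)) ->
  ex_series (fun i => Series (g i)) -> fsum (fun i => fsum (g i) M) N <= Series (fun i => Series (g i)).
Proof. intros Hp Hr Ho. eapply Rle_trans. apply (fsum_le _ (fun i => Series (g i))).
  intros; apply fsum_le_Series; auto. apply fsum_le_Series; auto. intros; apply Series_nonneg'; auto. Qed.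

Lemma DF2 (g : nat -> nat -> R) C : (forall i j, 0 <= g i j) ->
  (forall N, fsum (fun i => fsum (g i) N) N <= C) ->
  (forall i, ex_series (g i)) /\ ex_series (fun i => Series (g i)) /\ Series (fun i => Series (g i)) <= C.
Proof. intros Hp HC.
  assert (Hrect : forall N M, fsum (fun i => fsum (g i) M) N <= C).
  { intros N M. eapply Rle_trans; [|apply (HC (Nat.max N M))].
    eapply Rle_trans. apply (fsum_le _ (fun i => fsum (g i) (Nat.max N M))). intros; apply fsum_mono; auto; lia.
    apply (fsum_mono (fun i => fsum (g i) (Nat.max N M))). intros; apply fsum_nonneg; auto. lia. }
  assert (Hrow : forall i, ex_series (g i)).
  { intros i. apply (bounded_ex_series _ C). auto. intros M. eapply Rle_trans; [|apply (Hrect (S i) M)].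
    simpl. assert (0 <= fsum (fun i0 => fsum (g i0) M) i) by (apply fsum_nonneg; intros; apply fsum_nonneg; auto). lra. }
  assert (Hout : forall N, fsum (fun i => Series (g i)) N <= C).
  { intros N. apply (lim_le_R (fun M => fsum (fun i => fsum (g i) M) N)). apply fsum_lim. intros; apply ser_lim; auto. auto. }
  destruct (bounded_ex_series (fun i => Series (g i)) C) as [H1 H2]; auto. intros; apply Series_nonneg'; auto. Qed.

Lemma fsum_const c n : fsum (fun _ => c) n = INR n * c.
Proof. induction n; simpl fsum. simpl; lra. rewrite IHn, S_INR. lra. Qed.

Lemma dbl_lim (a : nat -> nat -> R) (K : nat -> nat -> nat) : AS a ->
  (forall i M, exists N0, forall N, (N0 <= N)%nat -> (M <= K N i)%nat) ->
  is_lim_seq (fun N => fsum (fun i => fsum (a i) (K N i)) N) (Series (fun i => Series (a i))).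
Proof. intros HA HK. pose proof (AS_rows _ HA) as Hrow. pose proof (AS_outer _ HA) as Hout.
  destruct HA as [Hra Hoa].
  set (s := fun i => Series (a i)). set (r := fun i => Series (fun j => Rabs (a i j))).
  pose proof (ser_lim _ Hout) as Hs. pose proof (ser_lim _ Hoa) as Hr.
  apply is_lim_seq_Reals in Hs. apply is_lim_seq_Reals in Hr.
  apply is_lim_seq_Reals. intros eps Heps.
  destruct (Hs (eps/3)) as [M1 HM1]. lra. destruct (Hr (eps/3)) as [M2 HM2]. lra.
  set (M := Nat.max M1 M2). set (d := eps / (3 * (INR M + 1))).
  assert (Hd : 0 < d). { unfold d. apply Rdiv_lt_0_compat. lra. pose proof (pos_INR M). lra. }
  assert (Hrho : forall i, exists k0, forall k, (k0 <= k)%nat -> r i - fsum (fun j => Rabs (a i j)) k < d).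
  { intros i. pose proof (ser_lim _ (Hra i)) as Hl. apply is_lim_seq_Reals in Hl.
    destruct (Hl d Hd) as [k0 Hk0]. exists k0. intros k Hk. specialize (Hk0 k Hk). unfold R_dist in Hk0.
    unfold r. apply Rabs_def2 in Hk0. lra. }
  assert (HA : forall M', exists N1, forall N, (N1 <= N)%nat -> forall i, (i < M')%nat ->
     r i - fsum (fun j => Rabs (a i j)) (K N i) < d).
  { induction M'. exists 0%nat. intros; lia.
    destruct IHM' as [N1 HN1]. destruct (Hrho M') as [k0 Hk0]. destruct (HK M' k0) as [N0 HN0].
    exists (Nat.max N1 N0). intros N HN i Hi. destruct (Nat.eq_dec i M') as [->|Hne].
    apply Hk0. apply HN0. lia. apply HN1. lia. lia. }
  destruct (HA M) as [N1 HN1].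
  exists (Nat.max M N1). intros N HN. unfold R_dist.
  assert (Hsplit : fsum (fun i => fsum (a i) (K N i)) N - Series s =
     (fsum s N - Series s) + fsum (fun i => fsum (a i) (K N i) - s i) N).
  { rewrite (fsum_ext (fun i => fsum (a i) (K N i) - s i) (fun i => fsum (a i) (K N i) + - s i)) by (intros; ring).
    rewrite fsum_plus, fsum_opp. ring. }
  rewrite Hsplit. eapply Rle_lt_trans. apply Rabs_triang.
  assert (H1 : Rabs (fsum s N - Series s) < eps / 3). { apply HM1. lia. }
  assert (H2 : Rabs (fsum (fun i => fsum (a i) (K N i) - s i) N) <= fsum (fun i => r i - fsum (fun j => Rabs (a i j)) (K N i)) N).
  { eapply Rle_trans. apply fsum_abs. apply fsum_le. intros i _. rewrite Rabs_minus_sym. apply tail_bound. auto. }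
  assert (H3 : fsum (fun i => r i - fsum (fun j => Rabs (a i j)) (K N i)) N < 2 * eps / 3).
  { replace N with (M + (N - M))%nat by lia. rewrite fsum_split.
    assert (E1 : fsum (fun i => r i - fsum (fun j => Rabs (a i j)) (K (M + (N - M))%nat i)) M <= INR M * d).
    { rewrite <- fsum_const. apply fsum_le. intros i Hi. left. apply HN1. lia. lia. }
    assert (E2 : INR M * d < eps / 3).
    { unfold d. pose proof (pos_INR M). apply (Rmult_lt_reg_r (3 * (INR M + 1))). nra.
      field_simplify; [|lra]. nra. }
    assert (E3 : fsum (fun i => r (M + i)%nat - fsum (fun j => Rabs (a (M + i)%nat j)) (K (M + (N - M))%nat (M + i)%nat)) (N - M)
       <= fsum (fun i => r (M + i)%nat) (N - M)).
    { apply fsum_le. intros i _. assert (0 <= fsum (fun j => Rabs (a (M + i)%nat j)) (K (M + (N - M))%nat (M + i)%nat)) by (apply fsum_nonneg; intros; apply Rabs_pos). lra. }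
    assert (E4 : fsum r M + fsum (fun i => r (M + i)%nat) (N - M) <= Series r).
    { rewrite <- fsum_split. apply fsum_le_Series; auto. intros; apply Series_nonneg'; auto. intros; apply Rabs_pos. }
    assert (E5 : Rabs (fsum r M - Series r) < eps / 3). { apply HM2. lia. }
    apply Rabs_def2 in E5. lra. }
  lra. Qed.


Definition QH (v : nat -> nat -> R) := Series (fun n => Series (fun m => v n m ^ 2)).
Definition Bf (u v : nat -> nat -> R) := Series (fun n => Series (fun m => u n m * v n m)).

Lemma ex_series_lin3 f g h (al be ga : R) : ex_series f -> ex_series g -> ex_series h ->
  ex_series (fun m => al * f m + be * g m + ga * h m).
Proof. intros. apply ex_series_plus_R. apply ex_series_plus_R. 1-3: apply ex_series_scal_R; auto. Qed.

Lemma Series_lin3 f g h (al be ga : R) : ex_series f -> ex_series g -> ex_series h ->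
  Series (fun m => al * f m + be * g m + ga * h m) = al * Series f + be * Series g + ga * Series h.
Proof. intros. rewrite Series_plus. rewrite Series_plus. rewrite !Series_scal_l. auto.
  1,2: apply ex_series_scal_R; auto. apply ex_series_plus_R; apply ex_series_scal_R; auto. apply ex_series_scal_R; auto. Qed.

Lemma term_le_Series f k : ex_series f -> (forall i, 0 <= f i) -> f k <= Series f.
Proof. intros H Hp. eapply Rle_trans; [|apply (fsum_le_Series f (S k)); auto]. simpl.
  assert (0 <= fsum f k) by (apply fsum_nonneg; auto). lra. Qed.

Lemma inH_AS v : AS (fun n m => v n m ^ 2) -> in_Htilde v.
Proof. intros H. split. apply AS_rows; auto. apply AS_outer; auto. Qed.

Lemma lin2_rows u v al be : in_Htilde u -> in_Htilde v ->
  (forall n, ex_series (fun m => al * u n m ^ 2 + be * v n m ^ 2)) /\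
  ex_series (fun n => Series (fun m => al * u n m ^ 2 + be * v n m ^ 2)).
Proof. intros [Hu1 Hu2] [Hv1 Hv2].
  assert (Hr : forall n, ex_series (fun m => al * u n m ^ 2 + be * v n m ^ 2)).
  { intros n. apply (ex_series_plus_R (fun m => al * u n m ^ 2) (fun m => be * v n m ^ 2)).
    apply (ex_series_scal_R al (fun m => u n m ^ 2)); apply Hu1.
    apply (ex_series_scal_R be (fun m => v n m ^ 2)); apply Hv1. }
  split. exact Hr.
  apply (ex_series_ext_R (fun n => al * Series (fun m => u n m ^ 2) + be * Series (fun m => v n m ^ 2))).
  { intros n. rewrite (Series_plus (fun m => al * u n m ^ 2) (fun m => be * v n m ^ 2)).
    rewrite (Series_scal_l al), (Series_scal_l be). reflexivity.
    apply (ex_series_scal_R al (fun m => u n m ^ 2)); apply Hu1.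
    apply (ex_series_scal_R be (fun m => v n m ^ 2)); apply Hv1. }
  apply (ex_series_plus_R (fun n => al * Series (fun m => u n m ^ 2)) (fun n => be * Series (fun m => v n m ^ 2))).
  apply (ex_series_scal_R al); exact Hu2. apply (ex_series_scal_R be); exact Hv2. Qed.

Lemma prod_AS u v : in_Htilde u -> in_Htilde v -> AS (fun n m => u n m * v n m).
Proof. intros Hu Hv. destruct (lin2_rows u v (/2) (/2) Hu Hv) as [H1 H2].
  apply (AS_le _ (fun n m => / 2 * u n m ^ 2 + / 2 * v n m ^ 2)); auto.
  intros i j. rewrite Rabs_mult. pose proof (Rabs_pos (u i j)). pose proof (Rabs_pos (v i j)).
  rewrite <- (pow2_abs (u i j)), <- (pow2_abs (v i j)).
  pose proof (pow2_ge_0 (Rabs (u i j) - Rabs (v i j))).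
  assert ((Rabs (u i j) - Rabs (v i j))^2 = Rabs (u i j)^2 - 2*(Rabs (u i j) * Rabs (v i j)) + Rabs (v i j)^2) by ring. lra. Qed.

Lemma inH_lin u v a b : in_Htilde u -> in_Htilde v -> in_Htilde (fun n m => a * u n m + b * v n m).
Proof. intros Hu Hv. destruct (lin2_rows u v (2 * a^2) (2 * b^2) Hu Hv) as [H1 H2].
  apply inH_AS. apply (AS_le _ (fun n m => 2 * a^2 * u n m ^ 2 + 2 * b^2 * v n m ^ 2)); auto.
  intros i j. rewrite Rabs_pos_eq by (apply pow2_ge_0). pose proof (pow2_ge_0 (a * u i j - b * v i j)).
  assert ((a * u i j - b * v i j)^2 + (a * u i j + b * v i j)^2 = 2*a^2*u i j^2 + 2*b^2*v i j^2) by ring. lra. Qed.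


Lemma ex_series_lin2 f g (al be : R) : ex_series f -> ex_series g -> ex_series (fun m => al * f m + be * g m).
Proof. intros. apply (ex_series_plus_R (fun m => al * f m) (fun m => be * g m)).
  apply (ex_series_scal_R al f); auto. apply (ex_series_scal_R be g); auto. Qed.

Lemma Series_lin2 f g (al be : R) : ex_series f -> ex_series g ->
  Series (fun m => al * f m + be * g m) = al * Series f + be * Series g.
Proof. intros. rewrite (Series_plus (fun m => al * f m) (fun m => be * g m)).
  rewrite (Series_scal_l al f), (Series_scal_l be g). auto.
  apply (ex_series_scal_R al f); auto. apply (ex_series_scal_R be g); auto. Qed.


Lemma inH_scal u c : in_Htilde u -> in_Htilde (fun n m => c * u n m).
Proof. intros [H1 H2]. split.
  intros n. apply (ex_series_ext_R (fun m => c^2 * u n m ^ 2)). intros; ring. apply (ex_series_scal_R (c^2) (fun m => u n m ^2)); auto.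
  apply (ex_series_ext_R (fun n => c^2 * Series (fun m => u n m ^ 2))).
  intros n. rewrite <- Series_scal_l. apply Series_ext. intros; ring.
  apply (ex_series_scal_R (c^2) (fun n => Series (fun m => u n m ^2))); auto. Qed.

Lemma inH_0 : in_Htilde (fun _ _ => 0).
Proof. destruct zero_ser as [Z1 Z2]. split. intros n. apply (ex_series_ext_R (fun _ => 0)); auto. intros; simpl; ring.
  apply (ex_series_ext_R (fun _ => 0)); auto. intros n. rewrite (Series_ext _ (fun _ => 0)) by (intros; simpl; ring). rewrite Z2; auto. Qed.

Lemma Q_lin u v a b : in_Htilde u -> in_Htilde v ->
  QH (fun n m => a * u n m + b * v n m) = a^2 * QH u + 2*a*b * Bf u v + b^2 * QH v.
Proof. intros Hu Hv. pose proof (prod_AS u v Hu Hv) as HP. destruct Hu as [Hu1 Hu2]; destruct Hv as [Hv1 Hv2].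
  unfold QH, Bf.
  rewrite <- (Series_lin3 (fun n => Series (fun m => u n m ^ 2)) (fun n => Series (fun m => u n m * v n m)) (fun n => Series (fun m => v n m ^ 2))); auto.
  2: apply AS_outer; auto.
  apply Series_ext. intros n.
  rewrite <- (Series_lin3 (fun m => u n m ^ 2) (fun m => u n m * v n m) (fun m => v n m ^ 2)); auto.
  2: apply (AS_rows _ HP).
  apply Series_ext. intros m. ring. Qed.

Lemma Bf_lin_r u v w a b : in_Htilde u -> in_Htilde v -> in_Htilde w ->
  Bf u (fun n m => a * v n m + b * w n m) = a * Bf u v + b * Bf u w.
Proof. intros Hu Hv Hw. pose proof (prod_AS u v Hu Hv) as H1. pose proof (prod_AS u w Hu Hw) as H2.
  unfold Bf. rewrite <- (Series_lin2 (fun n => Series (fun m => u n m * v n m)) (fun n => Series (fun m => u n m * w n m))).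
  2,3: apply AS_outer; auto.
  apply Series_ext. intros n.
  rewrite <- (Series_lin2 (fun m => u n m * v n m) (fun m => u n m * w n m)).
  2: apply (AS_rows _ H1). 2: apply (AS_rows _ H2).
  apply Series_ext. intros m. ring. Qed.

Lemma Bf_sym u v : Bf u v = Bf v u.
Proof. unfold Bf. apply Series_ext; intros n; apply Series_ext; intros m; ring. Qed.

Lemma Q_nonneg v : in_Htilde v -> 0 <= QH v.
Proof. intros [H1 H2]. unfold QH. apply Series_nonneg'; auto. intros n. apply Series_nonneg'; auto. intros; apply pow2_ge_0. Qed.

Lemma Q_zero v : in_Htilde v -> QH v = 0 -> forall n m, v n m = 0.
Proof. intros [H1 H2] HQ n m.
  assert (v n m ^ 2 <= Series (fun m => v n m ^ 2)). { apply (term_le_Series (fun m => v n m ^ 2)); auto. intros; apply pow2_ge_0. }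
  assert (Series (fun m => v n m ^ 2) <= QH v). { apply (term_le_Series (fun n => Series (fun m => v n m ^ 2))); auto. intros; apply Series_nonneg'; auto. intros; apply pow2_ge_0. }
  assert (v n m ^ 2 = 0) by (pose proof (pow2_ge_0 (v n m)); lra).
  simpl in H3. rewrite Rmult_1_r in H3. apply Rmult_integral in H3. destruct H3; auto. Qed.

Lemma Q_sqrt_lt v eps : in_Htilde v -> 0 < eps -> QH v < eps ^ 2 -> Htilde_norm v < eps.
Proof. intros Hv He HQ. unfold Htilde_norm. fold (QH v). rewrite <- (sqrt_pow2 eps) by lra.
  apply sqrt_lt_1_alt. split; [apply Q_nonneg; auto|auto]. Qed.

Lemma sqrt_Q_lt v eps : in_Htilde v -> 0 < eps -> Htilde_norm v < eps -> QH v < eps ^ 2.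
Proof. intros Hv He HQ. unfold Htilde_norm in HQ. fold (QH v) in HQ. pose proof (Q_nonneg v Hv).
  rewrite <- (sqrt_pow2 eps) in HQ by lra. apply sqrt_lt_0_alt in HQ. auto. Qed.


Lemma vext (u u' : nat -> nat -> R) : (forall n m, u n m = u' n m) -> u = u'.
Proof. intros H. apply functional_extensionality; intros n; apply functional_extensionality; intros m; auto. Qed.

Lemma inH_ext u u' : (forall n m, u n m = u' n m) -> in_Htilde u -> in_Htilde u'.
Proof. intros H. rewrite (vext u u' H). auto. Qed.

Lemma QH_ext u u' : (forall n m, u n m = u' n m) -> QH u = QH u'.
Proof. intros H. rewrite (vext u u' H). auto. Qed.

Lemma QH_scal u c : QH (fun n m => c * u n m) = c ^ 2 * QH u.
Proof. unfold QH. rewrite <- Series_scal_l. apply Series_ext; intros n. rewrite <- Series_scal_l. apply Series_ext; intros m. ring. Qed.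

Lemma inv_lim : is_lim_seq (fun n => / INR (S n)) 0.
Proof. assert (H : is_lim_seq (fun n => INR (S n)) p_infty). { apply (is_lim_seq_incr_1 INR). apply is_lim_seq_INR. }
  apply is_lim_seq_inv in H; [|discriminate]. simpl in H. exact H. Qed.

Lemma inv_pos n : 0 < / INR (S n).
Proof. apply Rinv_0_lt_compat. apply lt_0_INR. lia. Qed.

Lemma inv_mono n m : (n <= m)%nat -> / INR (S m) <= / INR (S n).
Proof. intros H. apply Rinv_le_contravar. apply lt_0_INR; lia. apply le_INR; lia. Qed.

Lemma QH_tri a b al : in_Htilde a -> in_Htilde b -> 0 < al ->
  QH (fun n m => a n m + b n m) <= (1 + al) * QH a + (1 + / al) * QH b.
Proof. intros Ha Hb Hal.
  rewrite (QH_ext _ (fun n m => 1 * a n m + 1 * b n m)) by (intros; ring).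
  rewrite Q_lin by auto.
  assert (H0 : 0 <= QH (fun n m => al * a n m + (-1) * b n m)).
  { apply Q_nonneg. apply inH_lin; auto. }
  rewrite Q_lin in H0 by auto.
  assert (H1 : 2 * Bf a b <= al * QH a + / al * QH b).
  { apply (Rmult_le_reg_l al); auto. rewrite Rmult_plus_distr_l. rewrite <- (Rmult_assoc al (/ al)). rewrite Rinv_r by lra.
    lra. }
  lra. Qed.

Definition combo (Y : nat -> nat -> nat -> R) (c : nat -> R) N := fun n m => fsum (fun k => c k * Y k n m) N.
Definition SpanR Y u := exists c N, u = combo Y c N.

Lemma combo_inH Y (HY : forall k, in_Htilde (Y k)) c N : in_Htilde (combo Y c N).
Proof. induction N. apply (inH_ext (fun _ _ => 0)). intros; reflexivity. apply inH_0.
  apply (inH_ext (fun n m => 1 * combo Y c N n m + c N * Y N n m)). intros; unfold combo; simpl; ring.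
  apply inH_lin; auto. Qed.

Lemma SpanR_inH Y (HY : forall k, in_Htilde (Y k)) u : SpanR Y u -> in_Htilde u.
Proof. intros [c [N ->]]. apply combo_inH; auto. Qed.

Definition pad (c : nat -> R) N k := if Nat.ltb k N then c k else 0.

Lemma combo_pad Y c N M : (N <= M)%nat -> forall n m, combo Y (pad c N) M n m = combo Y c N n m.
Proof. intros H n m. unfold combo. replace M with (N + (M - N))%nat by lia. rewrite fsum_split.
  rewrite (fsum_ext (fun i => pad c N (N + i) * Y (N + i)%nat n m) (fun _ => 0)).
  rewrite fsum_zero. rewrite Rplus_0_r. apply fsum_ext. intros i Hi. unfold pad. destruct (Nat.ltb_spec i N); [auto|lia].
  intros i _. unfold pad. destruct (Nat.ltb_spec (N + i) N); [lia|ring]. Qed.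

Lemma SpanR_lin Y u1 u2 a b : SpanR Y u1 -> SpanR Y u2 -> SpanR Y (fun n m => a * u1 n m + b * u2 n m).
Proof. intros [c1 [N1 ->]] [c2 [N2 ->]].
  exists (fun k => a * pad c1 N1 k + b * pad c2 N2 k), (Nat.max N1 N2). apply vext. intros n m.
  rewrite <- (combo_pad Y c1 N1 (Nat.max N1 N2)) by lia. rewrite <- (combo_pad Y c2 N2 (Nat.max N1 N2)) by lia.
  unfold combo. rewrite <- !fsum_scal. rewrite <- fsum_plus. apply fsum_ext. intros; ring. Qed.

Lemma SpanR_Y Y k : SpanR Y (Y k).
Proof. exists (fun j => if Nat.eqb j k then 1 else 0), (S k). apply vext. intros n m. unfold combo. simpl.
  rewrite (fsum_ext _ (fun _ => 0)). rewrite fsum_zero. rewrite Nat.eqb_refl. ring.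
  intros i Hi. destruct (Nat.eqb_spec i k). lia. ring. Qed.

Lemma SpanR_0 Y : SpanR Y (fun _ _ => 0).
Proof. exists (fun _ => 0), 0%nat. apply vext. intros; reflexivity. Qed.

Lemma combo_sum_n Y c N : exists c', forall n m, combo Y c N n m = sum_n (fun k => c' k * Y k n m) N.
Proof. exists (pad c N). intros n m. rewrite fsum_sum_n. simpl. unfold pad at 2. rewrite Nat.ltb_irrefl.
  rewrite <- (combo_pad Y c N N) by lia. unfold combo. ring. Qed.



Lemma term_le_QH u n m : in_Htilde u -> u n m ^ 2 <= QH u.
Proof. intros [H1 H2].
  assert (u n m ^ 2 <= Series (fun m => u n m ^ 2)). { apply (term_le_Series (fun m => u n m ^ 2)); auto. intros; apply pow2_ge_0. }
  assert (Series (fun m => u n m ^ 2) <= QH u). { apply (term_le_Series (fun n => Series (fun m => u n m ^ 2))); auto. intros; apply Series_nonneg'; auto. intros; apply pow2_ge_0. }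
  lra. Qed.

Lemma inH_diff u v : in_Htilde u -> in_Htilde v -> in_Htilde (fun n m => u n m - v n m).
Proof. intros. apply (inH_ext (fun n m => 1 * u n m + (-1) * v n m)). intros; ring. apply inH_lin; auto. Qed.

Lemma sq_lt_abs x eps : 0 < eps -> x ^ 2 < eps ^ 2 -> Rabs x < eps.
Proof. intros He H. destruct (Rlt_or_le (Rabs x) eps) as [h|h]; auto.
  rewrite <- pow2_abs in H. assert (eps * eps <= Rabs x * Rabs x) by (apply Rmult_le_compat; lra).
  simpl in H. lra. Qed.

Lemma complete_H (r : nat -> nat -> nat -> R) (e : nat -> R) :
  (forall j, in_Htilde (r j)) -> is_lim_seq e 0 ->
  (forall N i j, (N <= i)%nat -> (N <= j)%nat -> QH (fun n m => r i n m - r j n m) <= e N) ->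
  exists w, in_Htilde w /\ forall j, QH (fun n m => w n m - r j n m) <= e j.
Proof. intros Hr He HC.
  assert (HCa : forall n m, Cauchy_crit (fun i => r i n m)).
  { intros n m eps Heps. apply is_lim_seq_Reals in He. destruct (He (eps ^ 2)) as [N HN]. apply pow_lt; lra.
    exists N. intros a b Ha Hb. unfold R_dist. apply sq_lt_abs; auto.
    eapply Rle_lt_trans. apply (term_le_QH (fun n m => r a n m - r b n m)). apply inH_diff; auto.
    eapply Rle_lt_trans. apply HC; eauto. specialize (HN N (le_n N)). unfold R_dist in HN.
    apply Rabs_def2 in HN. lra. }
  set (w := fun n m => proj1_sig (Rcomplete.R_complete _ (HCa n m))).
  assert (Hw : forall n m, is_lim_seq (fun i => r i n m) (w n m)).
  { intros n m. apply is_lim_seq_Reals. unfold w. destruct (Rcomplete.R_complete _ (HCa n m)); simpl; auto. }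
  assert (Hj : forall j, in_Htilde (fun n m => w n m - r j n m) /\ QH (fun n m => w n m - r j n m) <= e j).
  { intros j.
    assert (Htr : forall N, fsum (fun n => fsum (fun m => (w n m - r j n m) ^ 2) N) N <= e j).
    { intros N. apply (lim_le_R (fun i => fsum (fun n => fsum (fun m => (r (i + j)%nat n m - r j n m) ^ 2) N) N)).
      - apply fsum_lim. intros n _. apply fsum_lim. intros m _.
        apply (is_lim_seq_ext (fun i => (r (i + j)%nat n m - r j n m) * (r (i + j)%nat n m - r j n m))). intros; ring.
        replace ((w n m - r j n m) ^ 2) with ((w n m - r j n m) * (w n m - r j n m)) by ring.
        assert (L : is_lim_seq (fun i => r (i + j)%nat n m - r j n m) (w n m - r j n m)).
        { apply is_lim_seq_minus'. apply (is_lim_seq_incr_n (fun i => r i n m)). apply Hw. apply is_lim_seq_const. }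
        apply is_lim_seq_mult'; auto.
      - intros i. eapply Rle_trans; [|apply (HC j (i + j)%nat j); lia].
        pose proof (inH_diff (r (i + j)%nat) (r j) (Hr _) (Hr _)) as [D1 D2].
        apply (DF1 (fun n m => (r (i + j)%nat n m - r j n m) ^ 2)); auto. intros; apply pow2_ge_0. }
    destruct (DF2 (fun n m => (w n m - r j n m) ^ 2) (e j)) as [D1 [D2 D3]]; auto. intros; apply pow2_ge_0.
    split; [split; auto|]. exact D3. }
  exists w. split.
  - destruct (Hj 0%nat) as [H1 _]. apply (inH_ext (fun n m => 1 * (w n m - r 0%nat n m) + 1 * r 0%nat n m)). intros; ring.
    apply inH_lin; auto.
  - intros j. apply Hj. Qed.


Lemma lim_aff A B : is_lim_seq (fun j => A + B * / INR (S j)) A.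
Proof. assert (H := is_lim_seq_plus' (fun _ => A) (fun j => B * / INR (S j)) A (B * 0) (is_lim_seq_const A)
    (is_lim_seq_mult' (fun _ => B) _ B 0 (is_lim_seq_const B) inv_lim)).
  replace (A + B * 0) with A in H by ring. exact H. Qed.

Lemma le_aff x A B : (forall j, x <= A + B * / INR (S j)) -> x <= A.
Proof. intros H. apply (lim_ge_R _ _ _ (lim_aff A B)). auto. Qed.

Lemma orth_exists (Y : nat -> nat -> nat -> R) (HY : forall k, in_Htilde (Y k)) v (Hv : in_Htilde v) eps (He : 0 < eps)
  (Hfar : forall u, SpanR Y u -> eps ^ 2 <= QH (fun n m => v n m - u n m)) :
  exists w, in_Htilde w /\ 0 < QH w /\ forall k, Bf w (Y k) = 0.
Proof.
  set (E := fun x => exists u, SpanR Y u /\ x = - QH (fun n m => v n m - u n m)).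
  assert (Eb : bound E).
  { exists 0. intros x [u [Hu ->]]. pose proof (Q_nonneg _ (inH_diff v u Hv (SpanR_inH Y HY u Hu))). lra. }
  assert (Ene : exists x, E x). { exists (- QH (fun n m => v n m - 0)). exists (fun _ _ => 0). split; auto. apply SpanR_0. }
  destruct (completeness E Eb Ene) as [mm [Hub Hleast]].
  set (D := - mm).
  assert (D1 : forall u, SpanR Y u -> D <= QH (fun n m => v n m - u n m)).
  { intros u Hu. assert (E (- QH (fun n m => v n m - u n m))) by (exists u; auto). apply Hub in H. unfold D; lra. }
  assert (D2 : eps ^ 2 <= D).
  { assert (mm <= - eps ^ 2). { apply Hleast. intros x [u [Hu ->]]. specialize (Hfar u Hu). lra. } unfold D; lra. }
  assert (D3 : forall d, 0 < d -> exists u, SpanR Y u /\ QH (fun n m => v n m - u n m) < D + d).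
  { intros d Hd. apply NNPP. intros Hn.
    assert (mm <= mm - d). { apply Hleast. intros x [u [Hu ->]]. destruct (Rlt_or_le (QH (fun n m => v n m - u n m)) (D + d)) as [h|h].
      exfalso; apply Hn; exists u; auto. unfold D in h; lra. }
    lra. }
  set (useq := fun j => proj1_sig (constructive_indefinite_description _ (D3 (/ INR (S j)) (inv_pos j)))).
  assert (Hu : forall j, SpanR Y (useq j) /\ QH (fun n m => v n m - useq j n m) < D + / INR (S j)).
  { intros j. unfold useq. destruct (constructive_indefinite_description _ _) as [u Hu']. simpl. auto. }
  set (r := fun j n m => v n m - useq j n m).
  assert (Hr : forall j, in_Htilde (r j)). { intros j. apply inH_diff; auto. apply (SpanR_inH Y HY). apply Hu. }
  assert (HC : forall N i j, (N <= i)%nat -> (N <= j)%nat -> QH (fun n m => r i n m - r j n m) <= 4 * / INR (S N)).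
  { intros N i j Hi Hj.
    set (mid := fun n m => / 2 * useq i n m + / 2 * useq j n m).
    assert (Hmid : D <= QH (fun n m => v n m - mid n m)). { apply D1. apply SpanR_lin; apply Hu. }
    rewrite (QH_ext (fun n m => v n m - mid n m) (fun n m => / 2 * r i n m + / 2 * r j n m)) in Hmid by (intros; unfold mid, r; field).
    rewrite Q_lin in Hmid by auto.
    rewrite (QH_ext _ (fun n m => 1 * r i n m + (-1) * r j n m)) by (intros; ring).
    rewrite Q_lin by auto.
    destruct (Hu i) as [_ Hi']. destruct (Hu j) as [_ Hj']. fold (r i) in Hi'. fold (r j) in Hj'.
    pose proof (inv_mono _ _ Hi). pose proof (inv_mono _ _ Hj).
    lra. }
  assert (Helim : is_lim_seq (fun N => 4 * / INR (S N)) 0).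
  { replace (Finite 0) with (Rbar_mult 4 0) by (simpl; f_equal; ring). apply is_lim_seq_scal_l. apply inv_lim. }
  destruct (complete_H r (fun N => 4 * / INR (S N)) Hr Helim HC) as [w [Hw Hwr]].
  assert (Hrw : forall j, QH (fun n m => r j n m - w n m) <= 4 * / INR (S j)).
  { intros j. rewrite (QH_ext _ (fun n m => (-1) * (w n m - r j n m))) by (intros; ring). rewrite QH_scal.
    specialize (Hwr j). lra. }
  assert (Ha : QH w <= D).
  { assert (Hal : forall al, 0 < al -> QH w <= (1 + al) * D).
    { intros al Hal. apply (le_aff _ _ ((1 + al) + (1 + / al) * 4)). intros j.
      rewrite (QH_ext w (fun n m => r j n m + (w n m - r j n m))) by (intros; ring).
      eapply Rle_trans. apply (QH_tri _ _ al); auto. apply inH_diff; auto.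
      destruct (Hu j) as [_ Hj']. fold (r j) in Hj'. specialize (Hwr j).
      assert (0 < 1 + / al) by (pose proof (Rinv_0_lt_compat al Hal); lra).
      assert ((1 + al) * QH (r j) <= (1 + al) * (D + / INR (S j))) by (apply Rmult_le_compat_l; lra).
      assert ((1 + / al) * QH (fun n m => w n m - r j n m) <= (1 + / al) * (4 * / INR (S j))) by (apply Rmult_le_compat_l; lra).
      lra. }
    apply (le_aff _ _ D). intros j. specialize (Hal _ (inv_pos j)). lra. }
  assert (Hb : forall k t, D <= QH (fun n m => w n m + t * Y k n m)).
  { intros k t.
    assert (Hal : forall al, 0 < al -> D <= (1 + al) * QH (fun n m => w n m + t * Y k n m)).
    { intros al Hal. apply (le_aff _ _ ((1 + / al) * 4)). intros j.
      assert (Hs : SpanR Y (fun n m => 1 * useq j n m + (- t) * Y k n m)). { apply SpanR_lin. apply Hu. apply SpanR_Y. }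
      specialize (D1 _ Hs).
      rewrite (QH_ext _ (fun n m => (w n m + t * Y k n m) + (r j n m - w n m))) in D1 by (intros; unfold r; ring).
      eapply Rle_trans. exact D1. eapply Rle_trans. apply (QH_tri _ _ al); auto.
      apply (inH_ext (fun n m => 1 * w n m + t * Y k n m)). intros; ring. apply inH_lin; auto.
      apply inH_diff; auto.
      specialize (Hrw j).
      assert (0 < 1 + / al) by (pose proof (Rinv_0_lt_compat al Hal); lra).
      assert ((1 + / al) * QH (fun n m => r j n m - w n m) <= (1 + / al) * (4 * / INR (S j))) by (apply Rmult_le_compat_l; lra).
      lra. }
    apply (le_aff _ _ (QH (fun n m => w n m + t * Y k n m))). intros j. specialize (Hal _ (inv_pos j)). lra. }
  exists w. split; auto. split.
  - specialize (Hb 0%nat 0). rewrite (QH_ext _ w) in Hb by (intros; ring). pose proof (pow_lt eps 2 He). lra.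
  - intros k. set (B := Bf w (Y k)). set (q := QH (Y k)).
    assert (Hq : 0 <= q) by (apply Q_nonneg; auto).
    set (s := / (q + 1)). assert (Hs : 0 < s) by (apply Rinv_0_lt_compat; lra).
    assert (Hsq : s * (q + 1) = 1) by (unfold s; field; lra).
    specialize (Hb k (- B * s)).
    rewrite (QH_ext _ (fun n m => 1 * w n m + (- B * s) * Y k n m)) in Hb by (intros; ring).
    rewrite Q_lin in Hb by auto. fold B q in Hb.
    assert (H0 : 0 <= (B * B * s) * (s * q - 2)).
    { assert (E1 : (B * B * s) * (s * q - 2) = 1 ^ 2 * QH w + 2 * 1 * (- B * s) * B + (- B * s) ^ 2 * q - QH w) by ring. lra. }
    assert (H1 : s * q - 2 < 0) by lra.
    assert (H2 : 0 <= B * B * s) by (apply Rmult_le_pos; [apply Rle_0_sqr|lra]).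
    assert (H3 : B * B * s = 0).
    { destruct H2 as [H2|H2]; auto. exfalso. assert ((B * B * s) * (s * q - 2) < 0) by (apply Rmult_pos_neg; auto). lra. }
    apply Rmult_integral in H3. destruct H3 as [H3|H3]; [|lra]. apply Rmult_integral in H3. destruct H3; auto. Qed.


Definition nsq (z : C) : R := fst z ^ 2 + snd z ^ 2.

Lemma nsq_nonneg z : 0 <= nsq z.
Proof. unfold nsq. pose proof (pow2_ge_0 (fst z)); pose proof (pow2_ge_0 (snd z)); lra. Qed.

Lemma Cmod2 z : Cmod z ^ 2 = nsq z.
Proof. unfold Cmod, nsq. rewrite pow2_sqrt; auto. pose proof (pow2_ge_0 (fst z)); pose proof (pow2_ge_0 (snd z)); lra. Qed.

Lemma nsq_conj z : nsq (Cconj z) = nsq z.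
Proof. destruct z; unfold nsq; simpl; ring. Qed.

Lemma abs_le_of_sq x y : 0 <= y -> x ^ 2 <= y ^ 2 -> Rabs x <= y.
Proof. intros Hy H. destruct (Rle_or_lt (Rabs x) y) as [h|h]; auto.
  rewrite <- pow2_abs in H. assert (y * y < Rabs x * Rabs x) by (apply Rmult_le_0_lt_compat; lra). simpl in H. lra. Qed.

Lemma amgm_abs x A B : 0 <= A -> 0 <= B -> x ^ 2 <= A * B -> Rabs x <= (A + B) / 2.
Proof. intros HA HB H. apply abs_le_of_sq. lra.
  assert (((A + B) / 2) ^ 2 - A * B = ((A - B) / 2) ^ 2) by field. pose proof (pow2_ge_0 ((A - B) / 2)). lra. Qed.

Lemma idx_odd p : Nat.odd (S (2 * p)%nat) = true /\ ((S (2 * p)%nat + 1) / 2 = S p)%nat.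
Proof. split. induction p. reflexivity. replace (S (2 * S p)%nat) with (S (S (S (2 * p)%nat))) by lia.
  unfold Nat.odd in *. simpl in *. auto.
  replace (S (2 * p)%nat + 1)%nat with (S p * 2)%nat by lia. apply Nat.div_mul. lia. Qed.

Lemma idx_even p : Nat.odd (S (S (2 * p)%nat)) = false /\ ((S (S (2 * p)%nat) + 1) / 2 = S p)%nat.
Proof. split. induction p. reflexivity. replace (S (S (2 * S p)%nat)) with (S (S (S (S (2 * p)%nat)))) by lia.
  unfold Nat.odd in *. simpl in *. auto.
  replace (S (S (2 * p)%nat) + 1)%nat with (1 + S p * 2)%nat by lia. rewrite Nat.div_add by lia. reflexivity. Qed.

Lemma m_cases m : m = 0%nat \/ exists p, m = S (2 * p)%nat \/ m = S (S (2 * p)%nat).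
Proof. destruct m. auto. right. destruct (Nat.Even_or_Odd m) as [[p Hp]|[p Hp]]; exists p; lia. Qed.

Definition vT (T : nat -> nat -> C) (n m : nat) : R :=
  match m with
  | O => Re (T n n)
  | S _ => let p := Nat.div (m + 1) 2 in
      if Nat.odd m then 2 * Re (T n (n + p)%nat) else - (2 * Im (T n (n + p)%nat))
  end.

Lemma vT_0 T n : vT T n 0 = Re (T n n).
Proof. reflexivity. Qed.
Lemma vT_odd T n p : vT T n (S (2 * p)%nat) = 2 * Re (T n (n + S p)%nat).
Proof. unfold vT. destruct (idx_odd p) as [h1 h2]. rewrite h1, h2. reflexivity. Qed.
Lemma vT_even T n p : vT T n (S (S (2 * p)%nat)) = - (2 * Im (T n (n + S p)%nat)).
Proof. unfold vT. destruct (idx_even p) as [h1 h2]. rewrite h1, h2. reflexivity. Qed.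

Lemma tilde_0 x n : tilde x n 0 = nsq (x n).
Proof. unfold tilde. apply Cmod2. Qed.
Lemma tilde_odd x n p : tilde x n (S (2 * p)%nat) = Re (Cmult (Cconj (x n)) (x (n + S p)%nat)).
Proof. unfold tilde. destruct (idx_odd p) as [h1 h2]. rewrite h1, h2. reflexivity. Qed.
Lemma tilde_even x n p : tilde x n (S (S (2 * p)%nat)) = Im (Cmult (Cconj (x n)) (x (n + S p)%nat)).
Proof. unfold tilde. destruct (idx_even p) as [h1 h2]. rewrite h1, h2. reflexivity. Qed.

Definition Tw (w : nat -> nat -> R) (i j : nat) : C :=
  if Nat.eqb i j then (w i 0%nat, 0)
  else if Nat.ltb i j then (w i (2 * (j - i) - 1)%nat / 2, - (w i (2 * (j - i))%nat / 2))
  else (w j (2 * (i - j) - 1)%nat / 2, w j (2 * (i - j))%nat / 2).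

Lemma Tw_sa w : is_selfadjoint (Tw w).
Proof. intros i j. unfold Tw, Cconj.
  destruct (Nat.eqb_spec i j), (Nat.eqb_spec j i), (Nat.ltb_spec i j), (Nat.ltb_spec j i); try lia; subst; simpl; f_equal; ring. Qed.

Lemma vT_Tw w n m : vT (Tw w) n m = w n m.
Proof. destruct (m_cases m) as [->|[p [->| ->]]].
  - rewrite vT_0. unfold Tw. rewrite Nat.eqb_refl. reflexivity.
  - rewrite vT_odd. unfold Tw. destruct (Nat.eqb_spec n (n + S p)); [lia|]. destruct (Nat.ltb_spec n (n + S p)); [|lia].
    replace (2 * (n + S p - n) - 1)%nat with (S (2 * p))%nat by lia. unfold Re; cbn [fst snd]. field.
  - rewrite vT_even. unfold Tw. destruct (Nat.eqb_spec n (n + S p)); [lia|]. destruct (Nat.ltb_spec n (n + S p)); [|lia].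
    replace (2 * (n + S p - n))%nat with (S (S (2 * p)))%nat by lia. unfold Im; cbn [fst snd]. field. Qed.

Lemma C_eq0 (z : C) : fst z = 0 -> snd z = 0 -> z = 0%C.
Proof. destruct z; simpl; intros -> ->; reflexivity. Qed.

Lemma vT_zero T : is_selfadjoint T -> (forall n m, vT T n m = 0) -> forall i j, T i j = 0%C.
Proof. intros Hsa Hv.
  assert (Hlt : forall i p, T i (i + S p)%nat = 0%C).
  { intros i p. pose proof (Hv i (S (2 * p))%nat) as h1. pose proof (Hv i (S (S (2 * p)))%nat) as h2.
    rewrite vT_odd in h1. rewrite vT_even in h2. apply C_eq0; unfold Re, Im in *; lra. }
  intros i j. destruct (Nat.lt_total i j) as [h|[h|h]].
  - replace j with (i + S (j - i - 1))%nat by lia. apply Hlt.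
  - subst. pose proof (Hv j 0%nat) as h0. rewrite vT_0 in h0. pose proof (Hsa j j) as hs.
    destruct (T j j) as [a b]. unfold Cconj in hs; simpl in *. injection hs; intros. apply C_eq0; simpl; lra.
  - rewrite Hsa. replace i with (j + S (i - j - 1))%nat by lia. rewrite Hlt. apply C_eq0; simpl; lra. Qed.

Lemma trunc_le (g : nat -> nat -> R) N (L : nat -> nat) : (forall i j, 0 <= g i j) -> (forall i, ex_series (g i)) ->
  ex_series (fun i => Series (g i)) -> fsum (fun i => fsum (g i) (L i)) N <= Series (fun i => Series (g i)).
Proof. intros Hp Hr Ho. eapply Rle_trans. apply (fsum_le _ (fun i => Series (g i))).
  intros; apply fsum_le_Series; auto. apply fsum_le_Series; auto. intros; apply Series_nonneg'; auto. Qed.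

Lemma HS_of_nsq T : (forall i, ex_series (fun j => nsq (T i j))) -> ex_series (fun i => Series (fun j => nsq (T i j))) -> is_HS T.
Proof. intros H1 H2. split. intros i. apply (ex_series_ext_R (fun j => nsq (T i j))). intros; rewrite Cmod2; auto. auto.
  apply (ex_series_ext_R (fun i => Series (fun j => nsq (T i j)))). intros i. apply Series_ext. intros; rewrite Cmod2; auto. auto. Qed.

Lemma HS_nsq T : is_HS T -> (forall i, ex_series (fun j => nsq (T i j))) /\ ex_series (fun i => Series (fun j => nsq (T i j))).
Proof. intros [H1 H2]. split. intros i. apply (ex_series_ext_R (fun j => Cmod (T i j) ^ 2)). intros; rewrite Cmod2; auto. auto.
  apply (ex_series_ext_R (fun i => Series (fun j => Cmod (T i j) ^ 2))). intros i. apply Series_ext. intros; rewrite Cmod2; auto. auto. Qed.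

Lemma l2_nsq x : is_l2 x -> ex_series (fun i => nsq (x i)).
Proof. intros H. apply (ex_series_ext_R (fun i => Cmod (x i) ^ 2)). intros; rewrite Cmod2; auto. auto. Qed.

Lemma Tw_pair w n p : nsq (Tw w n (n + 1 + p)%nat) + nsq (Tw w (n + 1 + p)%nat n) = (w n (2 * p + 1)%nat ^ 2 + w n (2 * p + 2)%nat ^ 2) / 2.
Proof. unfold Tw. destruct (Nat.eqb_spec n (n + 1 + p)); [lia|]. destruct (Nat.ltb_spec n (n + 1 + p)); [|lia].
  destruct (Nat.eqb_spec (n + 1 + p) n); [lia|]. destruct (Nat.ltb_spec (n + 1 + p) n); [lia|].
  replace (2 * (n + 1 + p - n) - 1)%nat with (2 * p + 1)%nat by lia. replace (2 * (n + 1 + p - n))%nat with (2 * p + 2)%nat by lia.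
  unfold nsq; cbn [fst snd]. field. Qed.

Lemma Tw_HS w : in_Htilde w -> is_HS (Tw w).
Proof. intros Hw. apply HS_of_nsq.
  all: destruct (DF2 (fun i j => nsq (Tw w i j)) (QH w)) as [D1 [D2 D3]]; auto; [intros; apply nsq_nonneg|].
  all: intros N; rewrite (fsum_tri (fun i j => nsq (Tw w i j))).
  all: eapply Rle_trans; [|apply (trunc_le (fun n m => w n m ^ 2) N (fun n => 2 * (N - 1 - n) + 1)%nat); [intros; apply pow2_ge_0|apply Hw|apply Hw]].
  all: apply fsum_le; intros n _; rewrite fsum_pairs.
  all: apply Rplus_le_compat; [unfold Tw; rewrite Nat.eqb_refl; unfold nsq; cbn [fst snd]; right; ring|].
  all: apply fsum_le; intros p _; rewrite Tw_pair; pose proof (pow2_ge_0 (w n (2 * p + 1)%nat)); pose proof (pow2_ge_0 (w n (2 * p + 2)%nat)); lra. Qed.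

Lemma vT_inH T : is_HS T -> is_selfadjoint T -> in_Htilde (vT T).
Proof. intros HT Hsa. destruct (HS_nsq T HT) as [H1 H2].
  set (g := fun i j => nsq (T i j)).
  assert (Hg : forall i j, 0 <= g i j) by (intros; apply nsq_nonneg).
  assert (Hgs : forall n p, g (n + 1 + p)%nat n = g n (n + 1 + p)%nat).
  { intros; unfold g. rewrite (Hsa (n + 1 + p)%nat n). apply nsq_conj. }
  destruct (DF2 (fun n m => vT T n m ^ 2) (2 * Series (fun i => Series (fun j => g i j)))) as [D1 [D2 D3]].
  intros; apply pow2_ge_0.
  2: split; auto.
  intros N.
  eapply Rle_trans. apply (fsum_le _ (fun n => fsum (fun m => vT T n m ^ 2) (2 * N + 1))).
  { intros n _. apply fsum_mono. intros; apply pow2_ge_0. lia. }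
  eapply Rle_trans. apply (fsum_le _ (fun n => 2 * (g n n + fsum (fun p => g n (n + 1 + p)%nat + g (n + 1 + p)%nat n) (2 * N - 1 - n)))).
  { intros n Hn. rewrite fsum_pairs. rewrite Rmult_plus_distr_l. apply Rplus_le_compat.
    - rewrite vT_0. unfold g, nsq, Re. pose proof (pow2_ge_0 (snd (T n n))). pose proof (pow2_ge_0 (fst (T n n))). lra.
    - rewrite <- fsum_scal. eapply Rle_trans; [|apply (fsum_mono (fun p => 2 * (g n (n + 1 + p)%nat + g (n + 1 + p)%nat n)))].
      2: { intros; pose proof (Hg n (n + 1 + i)%nat); pose proof (Hg (n + 1 + i)%nat n); lra. }
      2: { instantiate (1 := N). lia. }
      right. apply fsum_ext. intros p _. rewrite Hgs.
      replace (2 * p + 1)%nat with (S (2 * p)) by lia. replace (2 * p + 2)%nat with (S (S (2 * p))) by lia.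
      rewrite vT_odd, vT_even. replace (n + S p)%nat with (n + 1 + p)%nat by lia. unfold g, nsq, Re, Im. ring. }
  eapply Rle_trans. apply (fsum_mono (fun n => 2 * (g n n + fsum (fun p => g n (n + 1 + p)%nat + g (n + 1 + p)%nat n) (2 * N - 1 - n))) N (2 * N)).
  { intros n. apply Rmult_le_pos. lra. apply Rplus_le_le_0_compat; auto. apply fsum_nonneg. intros; pose proof (Hg n (n + 1 + i)%nat); pose proof (Hg (n + 1 + i)%nat n); lra. }
  lia.
  rewrite fsum_scal. rewrite <- fsum_tri. apply Rmult_le_compat_l. lra.
  apply DF1; auto. Qed.

Lemma tilde_inH x : is_l2 x -> in_Htilde (tilde x).
Proof. intros Hx. pose proof (l2_nsq x Hx) as Hx2. set (X2 := Series (fun i => nsq (x i))).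
  set (g := fun i j => nsq (x i) * nsq (x j)).
  assert (Hg : forall i j, 0 <= g i j) by (intros; apply Rmult_le_pos; apply nsq_nonneg).
  destruct (DF2 (fun n m => tilde x n m ^ 2) (X2 ^ 2)) as [D1 [D2 D3]].
  intros; apply pow2_ge_0.
  2: split; auto.
  intros N.
  eapply Rle_trans. apply (fsum_le _ (fun n => fsum (fun m => tilde x n m ^ 2) (2 * N + 1))).
  { intros n _. apply fsum_mono. intros; apply pow2_ge_0. lia. }
  eapply Rle_trans. apply (fsum_le _ (fun n => g n n + fsum (fun p => g n (n + 1 + p)%nat + g (n + 1 + p)%nat n) (2 * N - 1 - n))).
  { intros n Hn. rewrite fsum_pairs. apply Rplus_le_compat.
    - rewrite tilde_0. unfold g. right; ring.
    - eapply Rle_trans; [|apply (fsum_mono (fun p => g n (n + 1 + p)%nat + g (n + 1 + p)%nat n))].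
      2: { intros; pose proof (Hg n (n + 1 + i)%nat); pose proof (Hg (n + 1 + i)%nat n); lra. }
      2: { instantiate (1 := N). lia. }
      apply fsum_le. intros p _.
      replace (2 * p + 1)%nat with (S (2 * p)) by lia. replace (2 * p + 2)%nat with (S (S (2 * p))) by lia.
      rewrite tilde_odd, tilde_even. replace (n + S p)%nat with (n + 1 + p)%nat by lia.
      pose proof (Hg (n + 1 + p)%nat n).
      assert (E : Re (Cmult (Cconj (x n)) (x (n + 1 + p)%nat)) ^ 2 + Im (Cmult (Cconj (x n)) (x (n + 1 + p)%nat)) ^ 2 = g n (n + 1 + p)%nat).
      { unfold g, nsq. destruct (x n), (x (n + 1 + p)%nat). unfold Re, Im, Cmult, Cconj; cbn [fst snd]. ring. }
      lra. }
  eapply Rle_trans. apply (fsum_mono (fun n => g n n + fsum (fun p => g n (n + 1 + p)%nat + g (n + 1 + p)%nat n) (2 * N - 1 - n)) N (2 * N)).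
  { intros n. apply Rplus_le_le_0_compat; auto. apply fsum_nonneg. intros; pose proof (Hg n (n + 1 + i)%nat); pose proof (Hg (n + 1 + i)%nat n); lra. }
  lia.
  rewrite <- fsum_tri. unfold g. rewrite fsum_prod.
  assert (0 <= fsum (fun i => nsq (x i)) (2 * N)) by (apply fsum_nonneg; intros; apply nsq_nonneg).
  assert (fsum (fun i => nsq (x i)) (2 * N) <= X2) by (apply fsum_le_Series; auto; intros; apply nsq_nonneg).
  simpl. rewrite Rmult_1_r. apply Rmult_le_compat; auto. Qed.


Lemma lim_uniq (u : nat -> R) (l1 l2 : R) : is_lim_seq u l1 -> is_lim_seq u l2 -> l1 = l2.
Proof. intros H1 H2. apply is_lim_seq_unique in H1. apply is_lim_seq_unique in H2. rewrite H1 in H2. injection H2; auto. Qed.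

Lemma re_bound (z w : C) : Rabs (Re (Cmult z w)) <= (nsq z + nsq w) / 2 /\ Rabs (Im (Cmult z w)) <= (nsq z + nsq w) / 2.
Proof. assert (E : Re (Cmult z w) ^ 2 + Im (Cmult z w) ^ 2 = nsq z * nsq w).
  { destruct z, w; unfold nsq, Re, Im, Cmult; cbn [fst snd]; ring. }
  pose proof (pow2_ge_0 (Re (Cmult z w))). pose proof (pow2_ge_0 (Im (Cmult z w))).
  split; apply amgm_abs; try apply nsq_nonneg; lra. Qed.

Section MIsec.
End MIsec.

Lemma MI T x : is_HS T -> is_selfadjoint T -> is_l2 x ->
  l2inner (op_apply T x) x = (Bf (vT T) (tilde x), 0).
Proof. intros HT Hsa Hx.
  destruct (HS_nsq T HT) as [HT1 HT2]. pose proof (l2_nsq x Hx) as Hx2.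
  set (X2 := Series (fun i => nsq (x i))).
  set (a := fun i j => fst (x i) * Re (Cmult (T i j) (x j)) + snd (x i) * Im (Cmult (T i j) (x j))).
  set (c := fun i j => fst (x i) * Im (Cmult (T i j) (x j)) - snd (x i) * Re (Cmult (T i j) (x j))).
  set (b := fun i j => (nsq (T i j) + nsq (x i) * nsq (x j)) / 2).
  assert (Hb1 : forall i, ex_series (b i)).
  { intros i. apply (ex_series_ext_R (fun j => / 2 * nsq (T i j) + (/ 2 * nsq (x i)) * nsq (x j))). intros; unfold b; field.
    apply ex_series_lin2; auto. }
  assert (Hb2 : ex_series (fun i => Series (b i))).
  { apply (ex_series_ext_R (fun i => / 2 * Series (fun j => nsq (T i j)) + (/ 2 * X2) * nsq (x i))).
    intros i. rewrite (Series_ext (b i) (fun j => / 2 * nsq (T i j) + (/ 2 * nsq (x i)) * nsq (x j))) by (intros; unfold b; field).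
    rewrite Series_lin2; auto. unfold X2; ring.
    apply ex_series_lin2; auto. }
  assert (Hac : forall i j, Rabs (a i j) <= b i j /\ Rabs (c i j) <= b i j).
  { intros i j. assert (E : a i j ^ 2 + c i j ^ 2 = nsq (T i j) * (nsq (x i) * nsq (x j))).
    { unfold a, c. destruct (T i j), (x i), (x j); unfold nsq, Re, Im, Cmult; cbn [fst snd]; ring. }
    pose proof (pow2_ge_0 (a i j)). pose proof (pow2_ge_0 (c i j)).
    assert (0 <= nsq (x i) * nsq (x j)) by (apply Rmult_le_pos; apply nsq_nonneg).
    unfold b. split; apply amgm_abs; try apply nsq_nonneg; auto; lra. }
  assert (HAa : AS a) by (apply (AS_le a b); auto; intros; apply Hac).
  assert (HAc : AS c) by (apply (AS_le c b); auto; intros; apply Hac).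
  assert (Hre : forall i, ex_series (fun j => Re (Cmult (T i j) (x j))) /\ ex_series (fun j => Im (Cmult (T i j) (x j)))).
  { intros i. split; apply (ex_series_le_R _ (fun j => / 2 * nsq (T i j) + / 2 * nsq (x j))).
    1,3: intros j; destruct (re_bound (T i j) (x j)); lra.
    all: apply ex_series_lin2; auto. }
  assert (La : is_lim_seq (fun N => fsum (fun i => fsum (a i) N) N) (Series (fun i => Series (a i)))).
  { apply (dbl_lim a (fun N _ => N)); auto. intros i M; exists M; auto. }
  assert (Lc : is_lim_seq (fun N => fsum (fun i => fsum (c i) N) N) (Series (fun i => Series (c i)))).
  { apply (dbl_lim c (fun N _ => N)); auto. intros i M; exists M; auto. }
  assert (Lb : is_lim_seq (fun N => fsum (fun n => fsum (fun m => vT T n m * tilde x n m) (2 * (N - 1 - n) + 1)%nat) N)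
                 (Bf (vT T) (tilde x))).
  { apply (dbl_lim (fun n m => vT T n m * tilde x n m) (fun N n => (2 * (N - 1 - n) + 1)%nat)).
    apply prod_AS. apply vT_inH; auto. apply tilde_inH; auto.
    intros i M. exists (i + 1 + M)%nat. intros; lia. }
  assert (FI : forall N, fsum (fun n => fsum (fun m => vT T n m * tilde x n m) (2 * (N - 1 - n) + 1)%nat) N = fsum (fun i => fsum (a i) N) N).
  { intros N. rewrite (fsum_tri a). apply fsum_ext. intros n _. rewrite fsum_pairs. f_equal.
    - rewrite vT_0, tilde_0. unfold a. destruct (T n n), (x n); unfold nsq, Re, Im, Cmult; cbn [fst snd]; ring.
    - apply fsum_ext. intros p _.
      replace (2 * p + 1)%nat with (S (2 * p)) by lia. replace (2 * p + 2)%nat with (S (S (2 * p))) by lia.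
      rewrite vT_odd, vT_even, tilde_odd, tilde_even. replace (n + S p)%nat with (n + 1 + p)%nat by lia.
      unfold a. rewrite (Hsa (n + 1 + p)%nat n).
      destruct (T n (n + 1 + p)%nat), (x n), (x (n + 1 + p)%nat); unfold Re, Im, Cmult, Cconj; cbn [fst snd]; ring. }
  assert (FC : forall N, fsum (fun i => fsum (c i) N) N = 0).
  { intros N. rewrite (fsum_tri c). rewrite <- (fsum_zero N). apply fsum_ext. intros n _.
    rewrite (fsum_ext _ (fun _ => 0)). rewrite fsum_zero.
    pose proof (Hsa n n) as Hnn. unfold c. destruct (T n n) as [t1 t2]. unfold Cconj in Hnn; cbn [fst snd] in Hnn.
    injection Hnn; intros Ht. assert (t2 = 0) by lra. subst t2. destruct (x n); unfold Re, Im, Cmult, Cconj; cbn [fst snd]; ring.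
    intros p _. unfold c. rewrite (Hsa (n + 1 + p)%nat n).
    destruct (T n (n + 1 + p)%nat), (x n), (x (n + 1 + p)%nat); unfold Re, Im, Cmult, Cconj; cbn [fst snd]; ring. }
  unfold l2inner, Cseries, op_apply, Cseries. f_equal.
  - transitivity (Series (fun i => Series (a i))).
    + apply Series_ext. intros i. unfold a. rewrite Series_lin2 by (apply Hre).
      destruct (x i). unfold Re, Im, Cmult, Cconj; cbn [fst snd]. ring.
    + apply (lim_uniq _ _ _ La). eapply is_lim_seq_ext; [|exact Lb]. intros; apply FI.
  - transitivity (Series (fun i => Series (c i))).
    + apply Series_ext. intros i. unfold c. rewrite (Series_ext (fun j => fst (x i) * Im (Cmult (T i j) (x j)) - snd (x i) * Re (Cmult (T i j) (x j))) (fun j => fst (x i) * Im (Cmult (T i j) (x j)) + (- snd (x i)) * Re (Cmult (T i j) (x j)))) by (intros; ring).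
      rewrite Series_lin2 by (apply Hre).
      destruct (x i). unfold Re, Im, Cmult, Cconj; cbn [fst snd]. ring.
    + apply (lim_uniq _ _ _ Lc). eapply is_lim_seq_ext; [|apply is_lim_seq_const]. intros; rewrite FC; auto. Qed.


Lemma Bf_zero_r v : Bf v (fun _ _ => 0) = 0.
Proof. unfold Bf. destruct zero_ser as [_ Z]. rewrite (Series_ext _ (fun _ => 0)). apply Z. intros n.
  rewrite (Series_ext (fun m => v n m * 0) (fun _ => 0)). apply Z. intros; ring. Qed.

Lemma Bf_combo Y (HY : forall k, in_Htilde (Y k)) v (Hv : in_Htilde v) c N :
  Bf v (combo Y c N) = fsum (fun k => c k * Bf v (Y k)) N.
Proof. induction N.
  - simpl. rewrite <- (Bf_zero_r v). f_equal.
  - rewrite (vext (combo Y c (S N)) (fun n m => 1 * combo Y c N n m + c N * Y N n m)) by (intros; unfold combo; simpl; ring).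
    rewrite Bf_lin_r; auto. rewrite IHN. simpl. ring. apply combo_inH; auto. Qed.

Lemma vT_of_zero (T : nat -> nat -> C) : (forall i j, T i j = 0%C) -> forall n m, vT T n m = 0.
Proof. intros H n m. unfold vT. destruct m. rewrite H; reflexivity.
  destruct (Nat.odd (S m)); rewrite H; simpl; ring. Qed.

Lemma QH_zero_vec w : (forall n m, w n m = 0) -> QH w = 0.
Proof. intros H. rewrite (QH_ext w (fun n m => 0 * w n m)) by (intros; rewrite H; ring). rewrite QH_scal. ring. Qed.

Theorem mainTheorem12 (X : nat -> (nat -> C)) :
  is_frame X ->
  (injective_family X <-> dense_span_Htilde (fun k => tilde (X k))).
Proof. intros [HX _]. set (Y := fun k => tilde (X k)).
  assert (HY : forall k, in_Htilde (Y k)) by (intros; apply tilde_inH; auto).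
  split.
  - intros Hinj v Hv eps Heps. apply NNPP. intros Hn.
    assert (Hfar : forall u, SpanR Y u -> eps ^ 2 <= QH (fun n m => v n m - u n m)).
    { intros u [c [N ->]]. destruct (Rle_or_lt (eps ^ 2) (QH (fun n m => v n m - combo Y c N n m))) as [h|h]; auto.
      exfalso. apply Hn. destruct (combo_sum_n Y c N) as [c' Hc']. exists N, c'.
      rewrite (vext _ (fun n m => v n m - combo Y c N n m)) by (intros; rewrite Hc'; auto).
      apply Q_sqrt_lt; auto. apply inH_diff; auto. apply combo_inH; auto. }
    destruct (orth_exists Y HY v Hv eps Heps Hfar) as [w [Hw [Hpos Horth]]].
    assert (HT : forall i j, Tw w i j = 0%C).
    { apply Hinj. apply Tw_HS; auto. apply Tw_sa. intros k. rewrite MI; auto. 2: apply Tw_HS; auto. 2: apply Tw_sa.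
      rewrite (vext (vT (Tw w)) w) by (intros; apply vT_Tw). fold (Y k). rewrite Horth. reflexivity. }
    assert (Hw0 : forall n m, w n m = 0). { intros n m. rewrite <- (vT_Tw w n m). apply (vT_of_zero (Tw w)); auto. }
    rewrite (QH_zero_vec w Hw0) in Hpos. lra.
  - intros Hd T HT Hsa Hk. set (v := vT T).
    assert (Hv : in_Htilde v) by (apply vT_inH; auto).
    assert (Horth : forall k, Bf v (Y k) = 0).
    { intros k. specialize (Hk k). rewrite MI in Hk; auto. injection Hk; auto. }
    assert (Hsmall : forall eps, 0 < eps -> QH v < eps ^ 2).
    { intros eps He. destruct (Hd v Hv eps He) as [N [c Hc]].
      rewrite (vext _ (fun n m => v n m - combo Y c (S N) n m)) in Hc by (intros; unfold combo; rewrite fsum_sum_n; auto).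
      assert (Hu : in_Htilde (combo Y c (S N))) by (apply combo_inH; auto).
      apply sqrt_Q_lt in Hc; auto. 2: apply inH_diff; auto.
      rewrite (QH_ext _ (fun n m => 1 * v n m + (-1) * combo Y c (S N) n m)) in Hc by (intros; ring).
      rewrite Q_lin in Hc; auto. rewrite Bf_combo in Hc; auto.
      rewrite (fsum_ext _ (fun _ => 0)) in Hc by (intros; rewrite Horth; ring). rewrite fsum_zero in Hc.
      pose proof (Q_nonneg _ Hu). lra. }
    assert (HQ : QH v = 0).
    { pose proof (Q_nonneg v Hv). destruct H as [H|H]; auto.
      specialize (Hsmall (sqrt (QH v)) (sqrt_lt_R0 _ H)). rewrite pow2_sqrt in Hsmall; lra. }
    apply vT_zero; auto. apply Q_zero; auto. Qed.
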